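(* For every convex set $\mathcal{H}\subseteq\Delta_n$ and every $\varepsilon>0$, there is a strategy for the player that wins the $(\mathcal{H},\varepsilon)$-cutting-with-margin game in $O(\log(n)/\varepsilon^2)$ rounds.
   Context: $\Delta_n=\{h\in\mathbb{R}^n:\sum_i h_i=1,\ h_i\ge0\}$ and $B_1(h,r)=\{v\in\mathbb{R}^n:\|v-h\|_1\le r\}$. The $(\mathcal{H},\varepsilon)$-cutting-with-margin game is played between a player and an adversary who both know $\mathcal{H}$ and $\varepsilon$: start with $\mathcal{H}_0=\mathcal{H}$, $k=0$. While $\mathcal{H}_k\ne\emptyset$: the player picks a point $h_k\in\mathcal{H}_k$ (possibly depending on the history); the adversary picks any convex set $\mathcal{H}_{k+1}\subseteq\mathcal{H}_k$ with $\mathcal{H}_{k+1}\cap B_1(h_k,\varepsilon)=\emptyset$; increment $k$. A player strategy wins in at most $r$ rounds if for every sequence $\mathcal{H}=\mathcal{H}_0\supseteq\mathcal{H}_1\supseteq\cdots\supseteq\mathcal{H}_t$ of legal adversary moves against it, $\mathcal{H}_t\ne\emptyset$ implies $t<r$. *)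

(* Defs.v *)
From HB Require Import structures.
From mathcomp Require Import all_boot all_order all_algebra.
From mathcomp Require Import all_classical all_reals all_analysis.
Set Implicit Arguments. Unset Strict Implicit. Unset Printing Implicit Defensive.
Import Order.TTheory GRing.Theory Num.Theory.
Local Open Scope classical_set_scope.
Local Open Scope ring_scope.

Definition vec (R : realType) (n : nat) := 'I_n -> R.

Definition simplex (R : realType) (n : nat) : set (vec R n) :=
  [set h | (forall i, 0 <= h i) /\ \sum_(i < n) h i = 1].

Definition ball1 (R : realType) (n : nat) (h : vec R n) (r : R) : set (vec R n) :=
  [set v | \sum_(i < n) `|v i - h i| <= r].

Definition cvx_set (R : realType) (n : nat) (S : set (vec R n)) : Prop :=
  forall x y (t : R), S x -> S y -> 0 <= t -> t <= 1 ->
    S (fun i => t * x i + (1 - t) * y i).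

(* A player strategy maps the history [:: H_0; ...; H_k] of sets to the
   point h_k. *)
Definition strategy (R : realType) (n : nat) := seq (set (vec R n)) -> vec R n.

Definition history (R : realType) (n : nat) (Hs : nat -> set (vec R n)) (k : nat)
  : seq (set (vec R n)) := mkseq Hs k.+1.

Definition legal_play (R : realType) (n : nat) (H : set (vec R n)) (eps : R)
  (sigma : strategy R n) (Hs : nat -> set (vec R n)) (t : nat) : Prop :=
  Hs 0%N = H /\
  forall k, (k < t)%N ->
    [/\ cvx_set (Hs k.+1), Hs k.+1 `<=` Hs k &
        Hs k.+1 `&` ball1 (sigma (history Hs k)) eps = set0].

Definition valid_strategy (R : realType) (n : nat) (H : set (vec R n)) (eps : R)
  (sigma : strategy R n) : Prop :=
  forall Hs t, legal_play H eps sigma Hs t -> Hs t !=set0 ->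
    Hs t (sigma (history Hs t)).

Definition wins_within (R : realType) (n : nat) (H : set (vec R n)) (eps : R)
  (sigma : strategy R n) (r : nat) : Prop :=
  valid_strategy H eps sigma /\
  forall Hs t, legal_play H eps sigma Hs t -> Hs t !=set0 -> (t < r)%N.

(* Main.v *)
Require Import Defs.
From HB Require Import structures.
From mathcomp Require Import all_boot all_order all_algebra.
From mathcomp Require Import all_classical all_reals all_analysis.
From mathcomp Require Import ring lra.
Import Order.TTheory GRing.Theory Num.Theory.
Local Open Scope classical_set_scope.
Local Open Scope ring_scope.

Section Helpers.
Variable R : realType.

Lemma ln_gap (p q : R) : 0 <= p -> 0 < q -> p - q <= p * (ln p - ln q).
Proof.
move=> p0 q0; have [->|pp] := eqVneq p 0; first by rewrite mul0r sub0r oppr_le0 ltW.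
have pp0 : 0 < p by rewrite lt0r pp.
have := expR_ge1Dx (ln q - ln p); rewrite expRB !lnK ?posrE //.
rewrite ler_pdivlMr // => h; nra.
Qed.

Lemma ln_sq (u : R) : 0 <= u -> u ^+ 2 * ln (u ^+ 2) = 2 * (u ^+ 2 * ln u).
Proof.
move=> u0; have [->|uu] := eqVneq u 0; first by rewrite expr0n /= !mul0r mulr0.
have up : 0 < u by rewrite lt0r uu.
by rewrite expr2 lnM ?posrE //; ring.
Qed.

Lemma key (a b mu : R) : 0 <= a -> 0 <= b -> 0 <= mu ->
  mu * `|a - b| - mu ^+ 2 * (a + b) <=
  a * ln a + b * ln b - 2 * ((2^-1 * a + (1 - 2^-1) * b) * ln (2^-1 * a + (1 - 2^-1) * b)).
Proof.
move=> a0 b0 mu0.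
set m := 2^-1 * a + (1 - 2^-1) * b.
have [ab0|abp] := eqVneq (a + b) 0.
  have a00 : a = 0 by lra.
  have b00 : b = 0 by lra.
  have -> : m = 0 by rewrite /m a00 b00; ring.
  rewrite a00 b00 subr0 normr0 !mul0r !mulr0; lra.
have mp : 0 < m by rewrite /m; lra.
set u := Num.sqrt a; set v := Num.sqrt b; set w := Num.sqrt m.
have u0 : 0 <= u := sqrtr_ge0 a.
have v0 : 0 <= v := sqrtr_ge0 b.
have wp : 0 < w by rewrite sqrtr_gt0.
have ha : a = u ^+ 2 by rewrite sqr_sqrtr.
have hb : b = v ^+ 2 by rewrite sqr_sqrtr.
have hm : m = w ^+ 2 by rewrite sqr_sqrtr // ltW.
have lm : ln m = 2 * ln w by rewrite hm expr2 lnM ?posrE //; ring.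
have h1 := ln_gap u w u0 wp.
have h2 := ln_gap v w v0 wp.
have e1 : a * ln a = 2 * (u ^+ 2 * ln u) by rewrite ha ln_sq.
have e2 : b * ln b = 2 * (v ^+ 2 * ln v) by rewrite hb ln_sq.
have e3 : 2 * (m * ln m) = (a + b) * ln m by rewrite /m; field.
rewrite e1 e2 e3 lm.
have step1 : 2 * u * (u - w) <= 2 * u * (u * (ln u - ln w)) by apply: ler_wpM2l => //; lra.
have step2 : 2 * v * (v - w) <= 2 * v * (v * (ln v - ln w)) by apply: ler_wpM2l => //; lra.
have hw2 : w ^+ 2 = (u ^+ 2 + v ^+ 2) / 2 by rewrite -hm -ha -hb /m; field.
have habs : `|a - b| = `|u - v| * (u + v).
  by rewrite ha hb -[u + v](ger0_norm (addr_ge0 u0 v0)) -normrM; congr `|_|; ring.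
set d := `|u - v|.
have d0 : 0 <= d := normr_ge0 _.
have dd : d ^+ 2 = (u - v) ^+ 2 by rewrite /d real_normK // num_real.
have poly1 : mu * d * (u + v) - mu ^+ 2 * (u ^+ 2 + v ^+ 2) <= 2 * u * (u - w) + 2 * v * (v - w).
  have s1 : 0 <= (d - mu * (u + v)) ^+ 2 := sqr_ge0 _.
  have s2 : 0 <= (u - v) ^+ 2 := sqr_ge0 _.
  have s3 : 0 <= (2 * w - (u + v)) ^+ 2 := sqr_ge0 _.
  have s4 : 0 <= mu ^+ 2 * (u - v) ^+ 2 by apply: mulr_ge0; apply: sqr_ge0.
  nra.
rewrite habs ha hb -/d.
nra.
Qed.

End Helpers.
Set Implicit Arguments. Unset Strict Implicit.
Section Main.
Variable R : realType.
Variable n : nat.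

Definition negent (x : vec R n) : R := \sum_(i < n) x i * ln (x i).

Definition midp (x y : vec R n) : vec R n := fun i => 2^-1 * x i + (1 - 2^-1) * y i.

Lemma sum_key (x y : vec R n) (mu : R) : simplex x -> simplex y -> 0 <= mu ->
  mu * (\sum_(i < n) `|x i - y i|) - 2 * mu ^+ 2 <=
  negent x + negent y - 2 * negent (midp x y).
Proof.
move=> [x0 sx] [y0 sy] mu0.
have -> : 2 * mu ^+ 2 = mu ^+ 2 * (\sum_(i < n) x i + \sum_(i < n) y i).
  by rewrite sx sy; ring.
rewrite /negent -big_split /= mulr_sumr -big_split /= mulr_sumr -sumrB.
rewrite mulr_sumr -sumrB.
apply: ler_sum => i _.
by have := @key _ _ _ _ (x0 i) (y0 i) mu0; rewrite /midp.
Qed.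

Lemma simplex_pos (x : vec R n) : simplex x -> (0 < n)%N.
Proof.
case: n x => [|m] x [_ sx] //.
by move: sx; rewrite big_ord0 => /eqP; rewrite eq_sym oner_eq0.
Qed.

Lemma negent_lb (x : vec R n) : simplex x -> - ln (n%:R) <= negent x.
Proof.
move=> hx; have np := simplex_pos hx; case: hx => x0 sx.
have nR : 0 < n%:R :> R by rewrite ltr0n.
have : \sum_(i < n) (x i - n%:R^-1) <= \sum_(i < n) x i * (ln (x i) - ln (n%:R^-1)).
  apply: ler_sum => i _; apply: ln_gap => //; by rewrite invr_gt0.
have e1 : n%:R^-1 *+ n = 1 :> R by rewrite -[RHS](mulVf (lt0r_neq0 nR)) mulr_natr.
rewrite sumrB sx sumr_const card_ord e1 subrr.
rewrite lnV ?posrE //.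
under eq_bigr do rewrite opprK mulrDr.
rewrite big_split /= -mulr_suml sx mul1r.
rewrite /negent; lra.
Qed.

Lemma negent_ub (x : vec R n) : simplex x -> negent x <= 0.
Proof.
move=> [x0 sx]; rewrite /negent.
apply: (big_ind (fun v : R => v <= 0)) => // [u v hu hv|i _]; first by lra.
apply: mulr_ge0_le0 => //; apply: ln_le0.
rewrite -sx (bigD1 i) //= lerDl; apply: sumr_ge0 => j _; exact: x0.
Qed.

End Main.
Section Strat.
Variable R : realType.
Variable n : nat.

Definition spec (eps : R) (S : set (vec R n)) (h : vec R n) :=
  S h /\ forall z, S z -> negent h <= negent z + eps ^+ 2 / 32.

Definition strat (eps : R) : strategy R n := fun s =>
  match pselect (exists h, spec eps (last set0 s) h) with
  | left e => proj1_sig (cid e)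
  | right _ => fun _ => 0
  end.

Lemma strat_spec eps s : (exists h, spec eps (last set0 s) h) ->
  spec eps (last set0 s) (strat eps s).
Proof. by rewrite /strat; case: pselect => // e _; exact: (proj2_sig (cid e)). Qed.

Lemma spec_ex eps (S : set (vec R n)) : 0 < eps -> S !=set0 -> S `<=` @simplex R n ->
  exists h, spec eps S h.
Proof.
move=> e0 [z Sz] Ssub.
have hinf : has_inf [set negent x | x in S].
  split; first by exists (negent z), z.
  exists (- ln n%:R) => _ [x Sx <-]; exact: negent_lb (Ssub _ Sx).
have d0 : 0 < eps ^+ 2 / 32 by apply: divr_gt0 => //; apply: exprn_gt0.
have [_ [h Sh <-] hlt] := inf_adherent d0 hinf.
exists h; split => // y Sy.
have : inf [set negent x | x in S] <= negent y.
  by apply: (ge_inf hinf.2); exists y.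
lra.
Qed.

Lemma last_hist (Hs : nat -> set (vec R n)) k : last set0 (history Hs k) = Hs k.
Proof. by rewrite /history mkseqS last_rcons. Qed.

End Strat.

Unset Implicit Arguments.
Theorem theorem2 :
  exists C : nat, forall (R : realType) (n : nat) (H : set (vec R n)) (eps : R),
    cvx_set H -> H `<=` @simplex R n -> 0 < eps ->
    exists (sigma : strategy R n) (r : nat),
      wins_within H eps sigma r /\
      (r%:R <= C%:R * (1 + ln (n%:R) / eps ^+ 2) :> R).
Proof.
exists 12%N => R n H eps cvxH Hsub e0.
set L := ln (n%:R : R).
have L0 : 0 <= L.
  rewrite /L; have [->|np] := eqVneq n 0%N; first by rewrite ln0.
  by apply: ln_ge0; rewrite ler1n lt0n.
set g : R := 3 * eps ^+ 2 / 32.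
have e2 : 0 < eps ^+ 2 by apply: exprn_gt0.
have core : forall Hs t, legal_play H eps (@strat R n eps) Hs t ->
    [/\ forall k, (k <= t)%N -> Hs k `<=` H,
        forall k, (k <= t)%N -> cvx_set (Hs k) &
        forall k, (k <= t)%N -> forall z, Hs k z -> - L + k%:R * g <= negent z].
  move=> Hs t [H0 Hleg].
  have sub : forall k, (k <= t)%N -> Hs k `<=` H.
    elim=> [|k IH] kt; first by rewrite H0.
    have [_ s _] := Hleg k kt.
    by move=> z /s; apply: IH; apply: ltnW.
  have cvx : forall k, (k <= t)%N -> cvx_set (Hs k).
    case=> [|k] kt; first by rewrite H0.
    by have [c _ _] := Hleg k kt.
  split => //.
  elim=> [|k IH] kt z Hz.
    rewrite mul0r addr0; apply: negent_lb; apply: Hsub; by rewrite -H0.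
  have [_ s dis] := Hleg k kt.
  have kt' : (k <= t)%N by apply: ltnW.
  have Hkz : Hs k z by apply: s.
  have sp := strat_spec (eps := eps) (s := history Hs k).
  rewrite last_hist in sp.
  have [Hh hmin] := sp (spec_ex e0 (ex_intro _ z Hkz) (subset_trans (sub k kt') Hsub)).
  set h := @strat R n eps (history Hs k) in Hh hmin dis.
  have far : eps < \sum_(i < n) `|z i - h i|.
    rewrite ltNge; apply/negP => hb.
    have : (Hs k.+1 `&` ball1 h eps) z by split.
    by rewrite dis.
  have Hm : Hs k (midp z h).
    apply: (cvx k kt') => //; lra.
  have IHm := IH kt' _ Hm.
  have hmm := hmin _ Hm.
  have zs : simplex z by apply: Hsub; apply: (sub k kt').
  have hs : simplex h by apply: Hsub; apply: (sub k kt').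
  have mu0 : 0 <= eps / 4 by lra.
  have sk := sum_key zs hs mu0.
  have pr : eps / 4 * eps <= eps / 4 * \sum_(i < n) `|z i - h i|.
    by apply: ler_wpM2l => //; apply: ltW.
  rewrite -addn1 natrD mulrDl mul1r.
  rewrite /g.
  have : eps / 4 * eps = eps ^+ 2 / 4 by rewrite expr2; field.
  move=> hee.
  have : (eps / 4) ^+ 2 = eps ^+ 2 / 16 by field.
  rewrite /g in IHm; lra.
have sig_valid : valid_strategy H eps (@strat R n eps).
  move=> Hs t lp [z Hz].
  have [sub _ _] := core Hs t lp.
  have := strat_spec (eps := eps) (s := history Hs t).
  rewrite last_hist => sp.
  have [] := sp (spec_ex e0 (ex_intro _ z Hz) (subset_trans (sub t (leqnn t)) Hsub)).
  done.
set X : R := 11 * (L / eps ^+ 2).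
have X0 : 0 <= X by apply: mulr_ge0 => //; apply: divr_ge0 => //; apply: ltW.
exists (@strat R n eps), (Num.truncn X).+1; split.
  split => // Hs t lp [z Hz].
  have [sub _ cl] := core Hs t lp.
  have lb := cl t (leqnn t) z Hz.
  have ub := negent_ub (Hsub _ (sub t (leqnn t) _ Hz)).
  rewrite ltnS truncn_ge_nat //.
  have tg : t%:R * g <= L by lra.
  have t0 : 0 <= t%:R :> R by [].
  rewrite /X mulrA ler_pdivlMr //.
  rewrite /g in tg.
  nra.
rewrite -addn1 natrD.
have := truncn_le X; rewrite X0 => tX.
rewrite /X in tX *.
have : 0 <= L / eps ^+ 2 by apply: divr_ge0 => //; apply: ltW.
lra.
Qed.
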